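(* Let $N$ and $n$ be positive integers with $N \le n$, and let $\pi \in S_n$ be a permutation of $\{1,2,\dots,n\}$ such that every cycle of $\pi$ (in its disjoint cycle decomposition, fixed points counted as $1$-cycles) contains at most one element $i$ with $i > N$. Write the cycle type of $\pi$ as a partition $\lambda = (\lambda_1,\dots,\lambda_m,1,\dots,1) \vdash n$, where $\lambda_1 \ge \lambda_2 \ge \dots \ge \lambda_m > 1$ are the lengths of the cycles of $\pi$ of length greater than $1$, and the remaining parts equal to $1$ correspond to the fixed points of $\pi$. Then \[ \sum_{i=1}^{m} \lambda_i \le m + N. \]
   Context: In the paper's setting, $N$ is the number of keywords in a keyword query $q=\{k_1,\dots,k_N\}$ and $n=|V_D|$ is the size of the vocabulary of a relational database $D$ (the set of its relation names, attributes and attribute domains). A configuration of $q$ on $D$ (an injective map from keywords to database terms) is identified with a permutation $\pi\in S_{|V_D|}$ in which each cycle contains at most one element of value bigger than $N$; the claim concerns such permutations. The cycle type of a permutation is the partition of $n$ formed by the lengths of its cycles listed in weakly decreasing order. *)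

(* Defs.v *)
From mathcomp Require Import all_boot all_order all_fingroup.
Set Implicit Arguments. Unset Strict Implicit. Unset Printing Implicit Defensive.

(* Elements of 'I_n are 0..n-1; the paper's element i (1-based) is the ordinal
   i-1, so "i > N" (1-based) becomes "N <= x" for x : 'I_n. *)
Definition nontrivial_cycles (n : nat) (s : 'S_n) : {set {set 'I_n}} :=
  [set C in porbits s | 1 < #|C|].

(* Main.v *)
Require Import Defs.
From mathcomp Require Import all_boot all_order all_fingroup.

Lemma triv_porbits n (s : 'S_n) : trivIset (porbits s).
Proof.
apply/trivIsetP => _ _ /imsetP[x _ ->] /imsetP[y _ ->] neq.
apply/pred0P => z /=; apply/negbTE/negP => /andP[zx zy].
have /eqP e1 : porbit s z == porbit s x by rewrite eq_porbit_mem.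
have /eqP e2 : porbit s z == porbit s y by rewrite eq_porbit_mem.
by move: neq; rewrite -e1 -e2 eqxx.
Qed.

Lemma card_low n N : N <= n -> \sum_(x : 'I_n) (x < N) <= N.
Proof.
move=> _; rewrite -big_mkcond /= sum1_card.
rewrite cardE -(size_map val).
rewrite -[X in _ <= X](size_iota 0 N).
apply: uniq_leq_size; first by rewrite map_inj_uniq ?enum_uniq //; exact: val_inj.
move=> y /mapP[x]; rewrite mem_enum => xN ->.
by rewrite mem_iota.
Qed.

Theorem mainTheorem1 (N n : nat) (s : 'S_n) :
  0 < N -> 0 < n -> N <= n ->
  (forall C, C \in porbits s -> #|[set x in C | N <= nat_of_ord x]| <= 1) ->
  \sum_(C in nontrivial_cycles s) #|C| <= #|nontrivial_cycles s| + N.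
Proof.
move=> _ _ Nn H.
have sub : nontrivial_cycles s \subset porbits s.
  by apply/subsetP => C; rewrite inE => /andP[].
have tr : trivIset (nontrivial_cycles s) := trivIsetS sub (@triv_porbits n s).
have step : forall C, C \in nontrivial_cycles s ->
    #|C| <= 1 + \sum_(x in C) (x < N).
  move=> C CI.
  rewrite -sum1_card.
  have -> : \sum_(x in C) 1 = \sum_(x in C) ((N <= x) + (x < N)).
    by apply: eq_bigr => x _; case: (leqP N x).
  rewrite big_split /= leq_add2r -big_mkcondr /= sum1dep_card.
  have -> : [set x | (x \in C) && (N <= x)] = [set x in C | N <= nat_of_ord x].
    by apply/setP => x; rewrite !inE.
  by apply: H; apply: (subsetP sub).
apply: leq_trans; first by apply: leq_sum => C CI; exact: (step C CI).
rewrite big_split /= sum1_card leq_add2l.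
have -> : \sum_(C in nontrivial_cycles s) \sum_(x in C) (x < N)
   = \sum_(x in cover (nontrivial_cycles s)) (x < N) by rewrite big_trivIset.
apply: (leq_trans _ (@card_low n N Nn)).
rewrite [X in _ <= X](bigID (fun x => x \in cover (nontrivial_cycles s))) /=.
exact: leq_addr.
Qed.
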